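(* As formal power series in $x$, $$\sum_{n\ge 0}\left\langle {n \atop 2}\right\rangle_{\!2}x^n=\frac{x^2-x^3-x^4-3x^5+5x^6}{(1-x)^3(1-2x)^2(1-5x+5x^2)}.$$
   Context: A $c$-rook placement on an $n\times n$ board is a placement of $cn$ rooks on the cells, several rooks being allowed in the same cell, such that every row and every column contains exactly $c$ rooks (equivalently, an $n\times n$ matrix of nonnegative integers with all row and column sums equal to $c$). A drop is a rook lying strictly below the main diagonal, i.e.\ in a cell $(i,j)$ (row $i$, column $j$) with $i>j$, counted with multiplicity. The generalized Eulerian number $\left\langle {n \atop k}\right\rangle_{\!c}$ is the number of $c$-rook placements on the $n\times n$ board with exactly $k$ drops; for $n=0$ (empty board, only zero drops possible) $\left\langle {0 \atop k}\right\rangle_{\!c}=0$ when $k\ge1$. *)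

(* Defs.v *)
From HB Require Import structures.
From mathcomp Require Import all_boot all_order all_algebra.
Set Implicit Arguments. Unset Strict Implicit. Unset Printing Implicit Defensive.
Import Order.TTheory GRing.Theory Num.Theory.

(* Every entry is then
   at most c, so we may take entries in 'I_c.+1 (a finite type) without loss. *)
Definition rook_placement (c n : nat) (A : 'M['I_c.+1]_n) : bool :=
  [forall i, (\sum_(j < n) (A i j : nat))%N == c] &&
  [forall j, (\sum_(i < n) (A i j : nat))%N == c].

Definition drops (c n : nat) (A : 'M['I_c.+1]_n) : nat :=
  (\sum_(i < n) \sum_(j < n | (j < i)%N) (A i j : nat))%N.

Definition gen_eulerian (n k c : nat) : nat :=
  #|[set A : 'M['I_c.+1]_n | rook_placement A && (drops A == k)]|.

Local Open Scope ring_scope.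

Definition gf_num : {poly int} :=
  'X^2 - 'X^3 - 'X^4 - 3%:P * 'X^5 + 5%:P * 'X^6.

Definition gf_den : {poly int} :=
  (1 - 'X) ^+ 3 * (1 - 2%:P * 'X) ^+ 2 * (1 - 5%:P * 'X + 5%:P * 'X^2).

(* Main.v *)
Require Import Defs.
From HB Require Import structures.
From mathcomp Require Import all_boot all_order all_algebra.
From mathcomp Require Import zify ring.
From Stdlib Require Import FunctionalExtensionality.
Set Implicit Arguments. Unset Strict Implicit. Unset Printing Implicit Defensive.

Definition Tp j (rho sig : 'I_j -> nat) e : nat :=
  \sum_(A : 'M['I_3]_j)
    [&& [forall i, (\sum_(k < j) (A i k : nat)) + rho i == 2],
        [forall k, (\sum_(i < j) (A i k : nat)) + sig k == 2] &
        drops A == e].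

Lemma sum_row m n1 n2 (F : 'M['I_3]_(m, n1 + n2) -> nat) :
  \sum_A F A = \sum_(L : 'M_(m, n1)) \sum_(R : 'M_(m, n2)) F (row_mx L R).
Proof.
rewrite pair_big /=.
rewrite (reindex (fun p : 'M_(m,n1) * 'M_(m,n2) => row_mx p.1 p.2)) //.
exists (fun A => (lsubmx A, rsubmx A)) => [[L R] _|A _] /=.
  by rewrite row_mxKl row_mxKr.
by rewrite hsubmxK.
Qed.

Lemma sum_col m1 m2 n (F : 'M['I_3]_(m1 + m2, n) -> nat) :
  \sum_A F A = \sum_(U : 'M_(m1, n)) \sum_(D : 'M_(m2, n)) F (col_mx U D).
Proof.
rewrite pair_big /=.
rewrite (reindex (fun p : 'M_(m1,n) * 'M_(m2,n) => col_mx p.1 p.2)) //.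
exists (fun A => (usubmx A, dsubmx A)) => [[L R] _|A _] /=.
  by rewrite col_mxKu col_mxKd.
by rewrite vsubmxK.
Qed.

Lemma forall_split j (P : 'I_(1 + j) -> bool) :
  [forall i, P i] = P (lshift j ord0) && [forall i : 'I_j, P (rshift 1 i)].
Proof.
apply/forallP/andP => [H|[H0 /forallP H]]; first by split => //; apply/forallP.
move=> i; case: (splitP i) => [i0 Ei|i' Ei].
  have -> : i = lshift j i0 by apply/val_inj.
  by rewrite (ord1 i0).
have -> : i = rshift 1 i' by apply/val_inj.
exact: H.
Qed.
Section S.
Variables (j : nat) (a : 'M['I_3]_(1,1)) (r : 'M['I_3]_(1,j)) (c : 'M['I_3]_(j,1)) (R : 'M['I_3]_(j,j)).
Let A : 'M['I_3]_(1 + j) := col_mx (row_mx a r) (row_mx c R).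

Lemma rowA0 : \sum_(k < 1 + j) (A (lshift j ord0) k : nat) = a ord0 ord0 + \sum_(k < j) (r ord0 k : nat).
Proof. by rewrite big_split_ord big_ord1 /A !col_mxEu row_mxEl; congr (_ + _); apply: eq_bigr => k _; rewrite col_mxEu row_mxEr. Qed.

Lemma rowAS i : \sum_(k < 1 + j) (A (rshift 1 i) k : nat) = c i ord0 + \sum_(k < j) (R i k : nat).
Proof. by rewrite big_split_ord big_ord1 /A !col_mxEd row_mxEl; congr (_ + _); apply: eq_bigr => k _; rewrite col_mxEd row_mxEr. Qed.

Lemma colA0 : \sum_(i < 1 + j) (A i (lshift j ord0) : nat) = a ord0 ord0 + \sum_(i < j) (c i ord0 : nat).
Proof. by rewrite big_split_ord big_ord1 /A !col_mxEu row_mxEl; congr (_ + _); apply: eq_bigr => k _; rewrite col_mxEd row_mxEl. Qed.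

Lemma colAS k : \sum_(i < 1 + j) (A i (rshift 1 k) : nat) = r ord0 k + \sum_(i < j) (R i k : nat).
Proof. by rewrite big_split_ord big_ord1 /A !col_mxEu row_mxEr; congr (_ + _); apply: eq_bigr => i _; rewrite col_mxEd row_mxEr. Qed.

Lemma rowsA (rho : 'I_(1+j) -> nat) : [forall i, \sum_(k < 1 + j) (A i k : nat) + rho i == 2] =
  (a ord0 ord0 + \sum_(k < j) (r ord0 k : nat) + rho (lshift j ord0) == 2) &&
  [forall i, \sum_(k < j) (R i k : nat) + (rho (rshift 1 i) + c i ord0) == 2].
Proof.
rewrite forall_split rowA0; congr (_ && _); apply: eq_forallb => i.
rewrite rowAS; congr (_ == 2); lia.
Qed.

Lemma colsA (sig : 'I_(1+j) -> nat) : [forall k, \sum_(i < 1 + j) (A i k : nat) + sig k == 2] =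
  (a ord0 ord0 + \sum_(i < j) (c i ord0 : nat) + sig (lshift j ord0) == 2) &&
  [forall k, \sum_(i < j) (R i k : nat) + (sig (rshift 1 k) + r ord0 k) == 2].
Proof.
rewrite (forall_split (fun k => \sum_(i < 1 + j) (A i k : nat) + sig k == 2)) colA0; congr (_ && _); apply: eq_forallb => k.
rewrite colAS; congr (_ == 2); lia.
Qed.

Lemma dropsA : drops A = \sum_(i < j) (c i ord0 : nat) + drops R.
Proof.
rewrite /drops big_split_ord big_ord1 /= big_pred0 ?add0n; last by [].
rewrite -big_split /=; apply: eq_bigr => i _.
rewrite big_split_ord /= big_mkcond big_ord1 /= /A col_mxEd row_mxEl; congr (_ + _).
by apply: eq_big => [k|k _]; rewrite /= ?ltnS ?ltn_add2l // col_mxEd row_mxEr.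
Qed.
End S.

Lemma Tp_rec j (rho sig : 'I_(1+j) -> nat) e :
  Tp rho sig e =
  \sum_(a : 'M['I_3]_(1,1)) \sum_(r : 'M['I_3]_(1,j)) \sum_(c : 'M['I_3]_(j,1))
    [&& a ord0 ord0 + \sum_k (r ord0 k : nat) + rho (lshift j ord0) == 2,
        a ord0 ord0 + \sum_i (c i ord0 : nat) + sig (lshift j ord0) == 2 &
        \sum_i (c i ord0 : nat) <= e] *
    Tp (fun i => rho (rshift 1 i) + c i ord0) (fun k => sig (rshift 1 k) + r ord0 k)
       (e - \sum_i (c i ord0 : nat)).
Proof.
rewrite /Tp sum_col sum_row.
apply: eq_bigr => a _; apply: eq_bigr => r _; rewrite sum_row; apply: eq_bigr => c _.
rewrite big_distrr /=; apply: eq_bigr => R _.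
rewrite rowsA colsA dropsA.
set s := \sum_(i < j) (c i ord0 : nat).
have -> : (s + drops R == e) = (s <= e) && (drops R == e - s).
  by apply/eqP/andP => [<-|[H /eqP ->]]; [rewrite leq_addr addKn | rewrite subnKC].
by case: (_ == 2); case: (_ == 2); case: (s <= e); case: [forall i, _]; case: [forall k, _]; case: (drops R == _).
Qed.
Definition vs j (v : 'rV['I_3]_j) : nat := \sum_(i < j) (v ord0 i : nat).

Fixpoint gsum j (ks : seq nat) (F : ('I_j -> nat) -> nat) {struct ks} : nat :=
  match ks with
  | [::] => F (fun _ => 0)
  | k :: ks' => \sum_(v : 'rV['I_3]_j) (vs v == k) * gsum ks' (fun t => F (fun i => v ord0 i + t i))
  end.

Lemma gsum_sum j (I : finType) ks (F : I -> ('I_j -> nat) -> nat) :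
  gsum ks (fun t => \sum_(x : I) F x t) = \sum_(x : I) gsum ks (F x).
Proof.
elim: ks F => [|k ks IH] F //=.
rewrite exchange_big /=; apply: eq_bigr => v _.
by rewrite IH big_distrr.
Qed.

Lemma gsum_mul j ks b (F : ('I_j -> nat) -> nat) :
  gsum ks (fun t => b * F t) = b * gsum ks F.
Proof.
elim: ks F => [|k ks IH] F //=.
rewrite big_distrr /=; apply: eq_bigr => v _.
by rewrite IH mulnCA.
Qed.

Lemma gsum0 j ks : gsum ks (fun _ : 'I_j -> nat => 0) = 0.
Proof. by have := gsum_mul ks 0 (fun _ => 0); rewrite mul0n. Qed.

Lemma sum11 (F : 'M['I_3]_(1,1) -> nat) :
  \sum_(u : 'M['I_3]_(1,1)) F u = \sum_(x : 'I_3) F (const_mx x).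
Proof.
rewrite (reindex (fun x : 'I_3 => const_mx x)) //.
exists (fun u : 'M_(1,1) => u ord0 ord0) => [x _|u _]; first by rewrite mxE.
by apply/matrixP => i k; rewrite mxE !ord1.
Qed.

Lemma vs0 j (v : 'rV['I_3]_j) : (vs v == 0) = (v == const_mx ord0).
Proof.
rewrite /vs sum_nat_eq0; apply/forallP/eqP => [H|-> i]; last by rewrite mxE.
apply/matrixP => i k; rewrite (ord1 i) mxE; apply/val_inj => /=.
by apply/eqP; have := H k; rewrite implyTb.
Qed.

Lemma gsum_zero j ks (F : ('I_j -> nat) -> nat) : gsum (0 :: ks) F = gsum ks F.
Proof.
rewrite /= (bigD1 (const_mx ord0)) //= big1 ?addn0.
  rewrite vs0 eqxx mul1n; congr (gsum ks _); apply: functional_extensionality => t.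
  by congr (F _); apply: functional_extensionality => i; rewrite mxE.
by move=> v /negbTE Hv; rewrite vs0 Hv.
Qed.

Lemma gsum_filter j ks (F : ('I_j -> nat) -> nat) : gsum ks F = gsum [seq k <- ks | k != 0] F.
Proof.
elim: ks F => [|k ks IH] F //=.
case: eqP => [->|_]; first by rewrite -/(gsum (0 :: ks) F) gsum_zero IH.
by apply: eq_bigr => v _; rewrite IH.
Qed.

Definition tot j (t : 'I_j -> nat) := \sum_(i < j) t i.

Lemma gsum_supp j ks (F : ('I_j -> nat) -> nat) :
  gsum ks F = gsum ks (fun t => (tot t == sumn ks) * F t).
Proof.
elim: ks F => [|k ks IH] F /=; first by rewrite /tot big1 // mul1n.
apply: eq_bigr => v _.
rewrite IH [in RHS]IH; case: eqP => Hv; last by rewrite !mul0n.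
congr (_ * _); congr (gsum ks _); apply: functional_extensionality => t.
case: eqP => Ht; last by rewrite !mul0n.
rewrite /tot big_split /= -/(vs v) -/(tot t) Hv Ht eqxx mul1n.
by rewrite mul1n.
Qed.

Definition ccons j (x : nat) (t : 'I_j -> nat) : 'I_(1 + j) -> nat :=
  fun i => match split i with inl _ => x | inr i' => t i' end.

Lemma ccons_l j x (t : 'I_j -> nat) : ccons x t (lshift j ord0) = x.
Proof. by rewrite /ccons (unsplitK (inl _ : 'I_1 + 'I_j)). Qed.

Lemma ccons_r j x (t : 'I_j -> nat) i : ccons x t (rshift 1 i) = t i.
Proof. by rewrite /ccons (unsplitK (inr _ : 'I_1 + 'I_j)). Qed.

Fixpoint splits (ks : seq nat) : seq (nat * seq nat) :=
  match ks with
  | [::] => [:: (0, [::])]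
  | k :: ks' => flatten [seq [seq (x + p.1, (k - x) :: p.2) | p <- splits ks'] | x <- [seq x <- iota 0 3 | x <= k]]
  end.

Definition gsplit (ks : seq nat) (H : nat -> seq nat -> nat) : nat :=
  \sum_(p <- splits ks) H p.1 p.2.

Lemma gsplit_cons k ks H :
  gsplit (k :: ks) H = \sum_(x < 3 | x <= k) gsplit ks (fun y l => H (x + y) ((k - x) :: l)).
Proof.
rewrite /gsplit; have -> : splits (k :: ks) = flatten [seq [seq (x + p.1, (k - x) :: p.2) | p <- splits ks] | x <- [seq x <- iota 0 3 | x <= k]] by [].
rewrite big_flatten big_map big_filter -[iota 0 3]/(index_iota 0 3) big_mkord.
by apply: eq_bigr => x _; rewrite big_map.
Qed.

Lemma gsplit_sum (I : finType) ks (F : I -> nat -> seq nat -> nat) :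
  gsplit ks (fun y l => \sum_(x : I) F x y l) = \sum_(x : I) gsplit ks (F x).
Proof. by rewrite /gsplit exchange_big. Qed.

Lemma gsplit_mul ks b H : gsplit ks (fun y l => b * H y l) = b * gsplit ks H.
Proof. by rewrite /gsplit big_distrr. Qed.

Lemma sum_row1 j (F : 'rV['I_3]_(1 + j) -> nat) :
  \sum_(v : 'rV['I_3]_(1 + j)) F v = \sum_(x : 'I_3) \sum_(w : 'rV['I_3]_j) F (row_mx (const_mx x) w).
Proof.
rewrite pair_big /=.
rewrite (reindex (fun p : 'I_3 * 'rV['I_3]_j => row_mx (const_mx p.1) p.2)) //.
exists (fun v => (lsubmx v ord0 ord0, rsubmx v)) => [[x w] _|v _] /=.
  by rewrite row_mxKl row_mxKr mxE.
rewrite -[RHS]hsubmxK; congr (row_mx _ _).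
by apply/matrixP => i k; rewrite !ord1 mxE.
Qed.

Lemma vs_row j x (w : 'rV['I_3]_j) : vs (row_mx (const_mx x) w : 'rV_(1 + j)) = x + vs w.
Proof.
by rewrite /vs big_split_ord big_ord1 row_mxEl mxE; congr (_ + _); apply: eq_bigr => i _; rewrite row_mxEr.
Qed.

Lemma gsum_split j ks (F : ('I_(1 + j) -> nat) -> nat) :
  gsum ks F = gsplit ks (fun x l => gsum l (fun t : 'I_j -> nat => F (ccons x t))).
Proof.
elim: ks F => [|k ks IH] F.
  rewrite /gsplit /= big_cons big_nil addn0 /=; congr (F _).
  by apply: functional_extensionality => i; rewrite /ccons; case: split.
rewrite /= gsplit_cons sum_row1 (bigID (fun x : 'I_3 => x <= k)) /= [X in _ + X]big1 ?addn0; last first.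
  move=> x Hx; apply: big1 => w _; rewrite vs_row.
  by case: eqP => // Hk; move: Hx; rewrite -Hk leq_addr.
apply: eq_bigr => x Hx.
rewrite (@gsplit_sum _ ks (fun (v : 'rV['I_3]_j) y l => (vs v == k - x) *
     gsum l (fun t : 'I_j -> nat => F (ccons (x + y) (fun i : 'I_j => v ord0 i + t i))))).
apply: eq_bigr => w _; rewrite gsplit_mul vs_row.
have -> : (x + vs w == k) = (vs w == k - x) by apply/eqP/eqP; lia.
congr (_ * _); rewrite IH; congr (gsplit ks _).
apply: functional_extensionality => y; apply: functional_extensionality => l.
congr (gsum l _); apply: functional_extensionality => t; congr (F _).
apply: functional_extensionality => i.
case: (splitP i) => [i0 Ei|i' Ei].
  have -> : i = lshift j i0 by apply/val_inj.
  by rewrite (ord1 i0) row_mxEl mxE !ccons_l.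
have -> : i = rshift 1 i' by apply/val_inj.
by rewrite row_mxEr !ccons_r.
Qed.

Lemma gsum_add j ks (F F' : ('I_j -> nat) -> nat) :
  gsum ks (fun t => F t + F' t) = gsum ks F + gsum ks F'.
Proof.
elim: ks F F' => [|k ks IH] F F' //=.
rewrite -big_split /=; apply: eq_bigr => v _.
by rewrite IH mulnDr.
Qed.

Lemma gsum_sum_seq j (T : Type) (s : seq T) ks (F : T -> ('I_j -> nat) -> nat) :
  gsum ks (fun t => \sum_(x <- s) F x t) = \sum_(x <- s) gsum ks (F x).
Proof.
elim: s => [|x s IH].
  rewrite big_nil; transitivity (gsum ks (fun _ : 'I_j -> nat => 0)); last exact: gsum0.
  by congr (gsum ks _); apply: functional_extensionality => t; rewrite big_nil.
rewrite big_cons -IH -gsum_add; congr (gsum ks _); apply: functional_extensionality => t.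
by rewrite big_cons.
Qed.

Lemma gsum_gsplit j l ks (H : ('I_j -> nat) -> nat -> seq nat -> nat) :
  gsum l (fun t => gsplit ks (H t)) = gsplit ks (fun y l2 => gsum l (fun t => H t y l2)).
Proof. by rewrite /gsplit -gsum_sum_seq. Qed.

Definition G j (kr ks : seq nat) e : nat :=
  gsum kr (fun rho : 'I_j -> nat => gsum ks (fun sig => Tp rho sig e)).

Lemma Tp_bal j (rho sig : 'I_j -> nat) e : Tp rho sig e = (tot rho == tot sig) * Tp rho sig e.
Proof.
case: eqP => H; first by rewrite mul1n.
rewrite mul0n; apply: big1 => A _.
case: and3P => // -[/forallP Hr /forallP Hc _]; exfalso; apply: H.
have E1 : \sum_(i < j) (\sum_(k < j) (A i k : nat) + rho i) = \sum_(i < j) 2 by apply: eq_bigr => i _; apply/eqP.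
have E2 : \sum_(k < j) (\sum_(i < j) (A i k : nat) + sig k) = \sum_(k < j) 2 by apply: eq_bigr => k _; apply/eqP.
rewrite !big_split /= in E1 E2.
rewrite exchange_big /= in E2.
rewrite /tot; rewrite sum_nat_const card_ord in E1 E2.
by apply/eqP; rewrite -(eqn_add2l (\sum_(i < j) \sum_(k < j) (A i k : nat))) E1 -E2.
Qed.

Lemma G_bal j kr ks e : sumn kr != sumn ks -> G j kr ks e = 0.
Proof.
move=> Hne; rewrite /G gsum_supp.
transitivity (gsum kr (fun _ : 'I_j -> nat => 0)); last exact: gsum0.
congr (gsum kr _); apply: functional_extensionality => rho.
case: eqP => Hr; last by rewrite mul0n.
rewrite gsum_supp mul1n.
transitivity (gsum ks (fun _ : 'I_j -> nat => 0)); last exact: gsum0.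
congr (gsum ks _); apply: functional_extensionality => sig.
case: eqP => Hs; last by rewrite mul0n.
rewrite Tp_bal Hr Hs; move/negbTE: Hne => ->; by rewrite mul0n muln0.
Qed.

Lemma gsum_j0 ks (F : ('I_0 -> nat) -> nat) :
  gsum ks F = all (fun k => k == 0) ks * F (fun _ => 0).
Proof.
elim: ks F => [|k ks IH] F /=; first by rewrite mul1n.
rewrite (big_pred1 (const_mx ord0)); last first.
  by move=> v; symmetry; apply/eqP/matrixP => i [].
rewrite IH /vs big_ord0 mulnA; congr (_ * F _).
  by rewrite eq_sym; case: (k == 0); case: (all _ _).
by apply: functional_extensionality => -[].
Qed.

Lemma forall0 (P : pred 'I_0) : [forall i, P i].
Proof. by apply/forallP => -[]. Qed.

Lemma Tp_j0 (rho sig : 'I_0 -> nat) e : Tp rho sig e = (e == 0).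
Proof.
rewrite /Tp (big_pred1 (const_mx ord0)); last first.
  by move=> v; symmetry; apply/eqP/matrixP => i [].
by rewrite !forall0 /drops big_ord0 eq_sym.
Qed.

Lemma G_j0 kr ks e : G 0 kr ks e = [&& all (fun k => k == 0) kr, all (fun k => k == 0) ks & e == 0].
Proof.
rewrite /G gsum_j0 gsum_j0 Tp_j0.
by case: (all _ kr); case: (all _ ks); case: (e == 0).
Qed.

Lemma pick2 (a x y e n m : nat) :
  ([&& a + n + x == 2, a + m + y == 2 & m <= e] : nat) =
  \sum_(r < 3) \sum_(c < 3) [&& a + r + x == 2, a + c + y == 2 & c <= e] * (n == r) * (m == c).
Proof.
rewrite !big_ord_recr !big_ord0 /=.
case: n => [|[|[|n]]]; case: m => [|[|[|m]]]; rewrite /= ?muln0 ?muln1 ?add0n ?addn0 //;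
  try (have -> : (a + n.+3 + x == 2) = false by lia); try (have -> : (a + m.+3 + y == 2) = false by lia);
  rewrite ?andbF ?andFb //.
Qed.

Lemma sum_tr j (F : 'M['I_3]_(j,1) -> nat) :
  \sum_(c : 'M['I_3]_(j,1)) F c = \sum_(w : 'rV['I_3]_j) F (trmx w).
Proof.
rewrite (reindex (fun w : 'rV['I_3]_j => trmx w)) //.
by exists (fun c : 'M_(j,1) => trmx c) => w _; rewrite trmxK.
Qed.

Lemma Tp_rec' j x y (t' t : 'I_j -> nat) e :
  Tp (ccons x t') (ccons y t) e =
  \sum_(a < 3) \sum_(r : 'rV['I_3]_j) \sum_(w : 'rV['I_3]_j)
     [&& a + vs r + x == 2, a + vs w + y == 2 & vs w <= e] *
     Tp (fun i => w ord0 i + t' i) (fun k => r ord0 k + t k) (e - vs w).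
Proof.
rewrite Tp_rec sum11; apply: eq_bigr => a _; apply: eq_bigr => r _.
rewrite sum_tr; apply: eq_bigr => w _.
rewrite !ccons_l mxE.
have Hw : \sum_(i < j) (trmx w i ord0 : nat) = vs w by apply: eq_bigr => i _; rewrite mxE.
rewrite Hw -/(vs r); congr (_ * Tp _ _ _).
  by apply: functional_extensionality => i; rewrite ccons_r mxE addnC.
by apply: functional_extensionality => i; rewrite ccons_r addnC.
Qed.

Section Step.
Variables (j x y : nat) (l' l : seq nat) (e : nat).
Let Phi (rv w : 'rV['I_3]_j) e' :=
  gsum l' (fun t' : 'I_j -> nat => gsum l (fun t => Tp (fun i => w ord0 i + t' i) (fun k => rv ord0 k + t k) e')).
Let B (a rr cc : nat) := [&& a + rr + x == 2, a + cc + y == 2 & cc <= e].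

Lemma G_cons2 c r e' :
  G j (c :: l') (r :: l) e' = \sum_(w : 'rV['I_3]_j) (vs w == c) * \sum_(rv : 'rV['I_3]_j) (vs rv == r) * Phi rv w e'.
Proof.
rewrite /G /=; apply: eq_bigr => w _; congr (_ * _).
rewrite gsum_sum; apply: eq_bigr => rv _; by rewrite gsum_mul.
Qed.

Lemma LHS_form :
  gsum l' (fun t' : 'I_j -> nat => gsum l (fun t => Tp (ccons x t') (ccons y t) e)) =
  \sum_(a < 3) \sum_(rv : 'rV['I_3]_j) \sum_(w : 'rV['I_3]_j) B a (vs rv) (vs w) * Phi rv w (e - vs w).
Proof.
transitivity (gsum l' (fun t' : 'I_j -> nat => \sum_(a < 3) \sum_(rv : 'rV['I_3]_j) \sum_(w : 'rV['I_3]_j)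
     B a (vs rv) (vs w) * gsum l (fun t => Tp (fun i => w ord0 i + t' i) (fun k => rv ord0 k + t k) (e - vs w)))).
  congr (gsum l' _); apply: functional_extensionality => t'.
  transitivity (gsum l (fun t => \sum_(a < 3) \sum_(rv : 'rV['I_3]_j) \sum_(w : 'rV['I_3]_j)
     B a (vs rv) (vs w) * Tp (fun i => w ord0 i + t' i) (fun k => rv ord0 k + t k) (e - vs w))).
    by congr (gsum l _); apply: functional_extensionality => t; rewrite Tp_rec'.
  rewrite gsum_sum; apply: eq_bigr => a _; rewrite gsum_sum; apply: eq_bigr => rv _.
  rewrite gsum_sum; apply: eq_bigr => w _; by rewrite gsum_mul.
rewrite gsum_sum; apply: eq_bigr => a _; rewrite gsum_sum; apply: eq_bigr => rv _.
rewrite gsum_sum; apply: eq_bigr => w _; by rewrite gsum_mul.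
Qed.
Lemma G_step :
  gsum l' (fun t' : 'I_j -> nat => gsum l (fun t => Tp (ccons x t') (ccons y t) e)) =
  \sum_(a < 3) \sum_(r < 3) \sum_(c < 3 | B a r c) G j ((c : nat) :: l') ((r : nat) :: l) (e - c).
Proof.
rewrite LHS_form; apply: eq_bigr => a _.
transitivity (\sum_(rv : 'rV['I_3]_j) \sum_(w : 'rV['I_3]_j) \sum_(r < 3) \sum_(c < 3)
   B a r c * (vs rv == r) * (vs w == c) * Phi rv w (e - vs w)).
  apply: eq_bigr => rv _; apply: eq_bigr => w _.
  rewrite /B pick2 big_distrl; apply: eq_bigr => r _; rewrite big_distrl; by apply: eq_bigr.
transitivity (\sum_(r < 3) \sum_(c < 3) \sum_(w : 'rV['I_3]_j) \sum_(rv : 'rV['I_3]_j)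
   B a r c * (vs rv == r) * (vs w == c) * Phi rv w (e - vs w)); last first.
  symmetry; apply: eq_bigr => r _; rewrite big_mkcond; apply: eq_bigr => c _.
  rewrite G_cons2; case: ifP => Hb; last by symmetry; apply: big1 => w _; apply: big1 => rv _; rewrite !mul0n.
  apply: eq_bigr => w _; case: eqP => Hw; last by rewrite mul0n; symmetry; apply: big1 => rv _; rewrite muln0 mul0n.
  rewrite /= mul1n; apply: eq_bigr => rv _; rewrite Hw.
  by case: (vs rv == r); rewrite ?mul1n ?mul0n ?muln1.
under [in RHS]eq_bigr => r _ do rewrite exchange_big.
under [in RHS]eq_bigr => r _ do under eq_bigr => w _ do rewrite exchange_big.
rewrite [in RHS]exchange_big.
under [in RHS]eq_bigr => w _ do rewrite exchange_big.
by rewrite [in RHS]exchange_big.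
Qed.
End Step.

Definition terms (kr ks : seq nat) (e : nat) : seq (seq nat * seq nat * nat) :=
  flatten [seq flatten [seq flatten [seq flatten [seq
     [seq ((c :: p.2), (r :: q.2), e - c) | c <- [seq c <- iota 0 3 | [&& a + r + p.1 == 2, a + c + q.1 == 2 & c <= e]]]
   | r <- iota 0 3] | a <- iota 0 3] | q <- splits ks] | p <- splits kr].

Lemma iota3 (F : nat -> nat) : \sum_(x <- iota 0 3) F x = \sum_(x < 3) F x.
Proof. by rewrite -[iota 0 3]/(index_iota 0 3) big_mkord. Qed.

Lemma terms_sum kr ks e (f : seq nat * seq nat * nat -> nat) :
  \sum_(t <- terms kr ks e) f t =
  \sum_(p <- splits kr) \sum_(q <- splits ks) \sum_(a < 3) \sum_(r < 3)
     \sum_(c < 3 | [&& a + r + p.1 == 2, a + c + q.1 == 2 & c <= e]) f ((c : nat) :: p.2, (r : nat) :: q.2, e - c).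
Proof.
rewrite /terms big_flatten big_map; apply: eq_bigr => p _.
rewrite big_flatten big_map; apply: eq_bigr => q _.
rewrite big_flatten big_map iota3; apply: eq_bigr => a _.
rewrite big_flatten big_map iota3; apply: eq_bigr => r _.
rewrite big_map big_filter -[iota 0 3]/(index_iota 0 3) big_mkord.
by [].
Qed.

Lemma G_rec j kr ks e : G (1 + j) kr ks e = \sum_(t <- terms kr ks e) G j t.1.1 t.1.2 t.2.
Proof.
rewrite terms_sum /G.
transitivity (gsum kr (fun rho : 'I_(1 + j) -> nat =>
   gsplit ks (fun y l => gsum l (fun t : 'I_j -> nat => Tp rho (ccons y t) e)))).
  by congr (gsum kr _); apply: functional_extensionality => rho; rewrite gsum_split.
rewrite gsum_split /gsplit; apply: eq_bigr => p _.
rewrite gsum_sum_seq; apply: eq_bigr => q _.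
by rewrite G_step.
Qed.

Definition st := (seq nat * seq nat * nat)%type.
Definition Gs j (s : st) := G j s.1.1 s.1.2 s.2.
Definition bal (s : st) := sumn s.1.1 == sumn s.1.2.
Definition nrm (s : st) : st := ([seq k <- s.1.1 | k != 0], [seq k <- s.1.2 | k != 0], s.2).

Lemma Gs_nrm j s : Gs j s = bal s * Gs j (nrm s).
Proof.
rewrite /Gs /bal /nrm /=; case: eqP => H; last by rewrite mul0n G_bal //; apply/eqP.
rewrite mul1n /G gsum_filter; congr (gsum _ _); apply: functional_extensionality => rho.
by rewrite gsum_filter.
Qed.

Lemma sum_pick (L : seq st) x (f : st -> nat) : uniq L -> x \in L -> \sum_(u <- L) (x == u) * f u = f x.
Proof.
elim: L => [|y L IH] //= /andP[HyL HL]; rewrite in_cons big_cons.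
case: eqP => [->|Hne] /= Hx.
  rewrite mul1n big1_seq ?addn0 // => u /= Hu; case: eqP => // Eu.
  by move: HyL; rewrite Eu Hu.
by rewrite mul0n add0n IH.
Qed.

Lemma red j s (L : seq st) : uniq L -> all (fun t => bal t ==> (nrm t \in L)) (terms s.1.1 s.1.2 s.2) ->
  Gs (1 + j) s = \sum_(u <- L) count (fun t => bal t && (nrm t == u)) (terms s.1.1 s.1.2 s.2) * Gs j u.
Proof.
move=> HL /allP Hall; rewrite /Gs G_rec.
transitivity (\sum_(t <- terms s.1.1 s.1.2 s.2) \sum_(u <- L) (bal t && (nrm t == u)) * Gs j u).
  rewrite big_seq [RHS]big_seq; apply: eq_bigr => t Ht.
  rewrite -/(Gs j t) Gs_nrm; case: (boolP (bal t)) => Hb /=.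
    by rewrite mul1n sum_pick //; move: (Hall t Ht); rewrite Hb.
  by rewrite mul0n big1.
rewrite exchange_big; apply: eq_bigr => u _.
elim: (terms _ _ _) => [|t r IH]; first by rewrite !big_nil.
rewrite !big_cons IH /= mulnDl; by case: (_ && _).
Qed.

Definition states : seq st :=
  [:: ([::],[::],0); ([::],[::],1); ([::],[::],2); ([::1],[::1],0); ([::1],[::1],1);
      ([::2],[::2],0); ([::2],[::1;1],0); ([::1;1],[::2],0); ([::1;1],[::1;1],0)].

Definition Mc (k l : nat) : nat :=
  let s := nth ([::],[::],0) states k in
  count (fun t => bal t && (nrm t == nth ([::],[::],0) states l)) (terms s.1.1 s.1.2 s.2).

Definition v j k := Gs j (nth ([::],[::],0) states k).
Arguments v : simpl never.

Lemma states_ok : all (fun k => let s := nth ([::],[::],0) states k in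
   all (fun t => bal t ==> (nrm t \in states)) (terms s.1.1 s.1.2 s.2)) (iota 0 9).
Proof. by vm_compute. Qed.

Lemma v_rec j k : k < 9 -> v j.+1 k = \sum_(l < 9) Mc k l * v j l.
Proof.
move=> Hk; rewrite /v (red j (L := states)) //; last first.
  by move: states_ok => /allP/(_ k); rewrite mem_iota /=; apply.
rewrite (big_nth ([::],[::],0)) big_mkord.
by apply: eq_bigr.
Qed.

Lemma v0 k : k < 9 -> v 0 k = (k == 0).
Proof.
rewrite /v /Gs G_j0.
by case: k => [|[|[|[|[|[|[|[|[|k]]]]]]]]].
Qed.

Lemma vr0 j : v j.+1 0 = v j 0.
Proof. rewrite v_rec // !big_ord_recr big_ord0 /= /Mc /=; lia. Qed.

Lemma vr1 j : v j.+1 1 = v j 1 + v j 3.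
Proof. rewrite v_rec // !big_ord_recr big_ord0 /= /Mc /=; lia. Qed.

Lemma vr2 j : v j.+1 2 = v j 2 + v j 4 + v j 5.
Proof. rewrite v_rec // !big_ord_recr big_ord0 /= /Mc /=; lia. Qed.

Lemma vr3 j : v j.+1 3 = v j 0 + 2 * v j 3.
Proof. rewrite v_rec // !big_ord_recr big_ord0 /= /Mc /=; lia. Qed.

Lemma vr4 j : v j.+1 4 = v j 1 + 2 * v j 3 + 2 * v j 4 + v j 7 + v j 8.
Proof. rewrite v_rec // !big_ord_recr big_ord0 /= /Mc /=; lia. Qed.

Lemma vr5 j : v j.+1 5 = v j 0 + 2 * v j 3 + 2 * v j 5 + v j 6.
Proof. rewrite v_rec // !big_ord_recr big_ord0 /= /Mc /=; lia. Qed.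

Lemma vr6 j : v j.+1 6 = v j 0 + 3 * v j 3 + v j 5 + 3 * v j 6.
Proof. rewrite v_rec // !big_ord_recr big_ord0 /= /Mc /=; lia. Qed.

Lemma vr7 j : v j.+1 7 = v j 0 + 4 * v j 3 + 2 * v j 7 + v j 8.
Proof. rewrite v_rec // !big_ord_recr big_ord0 /= /Mc /=; lia. Qed.

Lemma vr8 j : v j.+1 8 = v j 0 + 6 * v j 3 + v j 7 + 3 * v j 8.
Proof. rewrite v_rec // !big_ord_recr big_ord0 /= /Mc /=; lia. Qed.

From Stdlib Require Import BinInt.
Section ZS.
Local Open Scope Z_scope.

Lemma Z1_0 j : Z.of_nat (v (j + 1) 0) = Z.of_nat (v j 0).
Proof. rewrite addn1 vr0; lia. Qed.

Lemma Z1_1 j : Z.of_nat (v (j + 1) 1) = Z.of_nat (v j 1) + Z.of_nat (v j 3).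
Proof. rewrite addn1 vr1; lia. Qed.

Lemma Z1_2 j : Z.of_nat (v (j + 1) 2) = Z.of_nat (v j 2) + Z.of_nat (v j 4) + Z.of_nat (v j 5).
Proof. rewrite addn1 vr2; lia. Qed.

Lemma Z1_3 j : Z.of_nat (v (j + 1) 3) = Z.of_nat (v j 0) + 2 * Z.of_nat (v j 3).
Proof. rewrite addn1 vr3; lia. Qed.

Lemma Z1_4 j : Z.of_nat (v (j + 1) 4) = Z.of_nat (v j 1) + 2 * Z.of_nat (v j 3) + 2 * Z.of_nat (v j 4) + Z.of_nat (v j 7) + Z.of_nat (v j 8).
Proof. rewrite addn1 vr4; lia. Qed.

Lemma Z1_5 j : Z.of_nat (v (j + 1) 5) = Z.of_nat (v j 0) + 2 * Z.of_nat (v j 3) + 2 * Z.of_nat (v j 5) + Z.of_nat (v j 6).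
Proof. rewrite addn1 vr5; lia. Qed.

Lemma Z1_6 j : Z.of_nat (v (j + 1) 6) = Z.of_nat (v j 0) + 3 * Z.of_nat (v j 3) + Z.of_nat (v j 5) + 3 * Z.of_nat (v j 6).
Proof. rewrite addn1 vr6; lia. Qed.

Lemma Z1_7 j : Z.of_nat (v (j + 1) 7) = Z.of_nat (v j 0) + 4 * Z.of_nat (v j 3) + 2 * Z.of_nat (v j 7) + Z.of_nat (v j 8).
Proof. rewrite addn1 vr7; lia. Qed.

Lemma Z1_8 j : Z.of_nat (v (j + 1) 8) = Z.of_nat (v j 0) + 6 * Z.of_nat (v j 3) + Z.of_nat (v j 7) + 3 * Z.of_nat (v j 8).
Proof. rewrite addn1 vr8; lia. Qed.

Lemma Z2_0 j : Z.of_nat (v (j + 2) 0) = Z.of_nat (v j 0).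
Proof. rewrite (_ : (j + 2 = (j + 1).+1)%nat); last by rewrite addnS.
rewrite vr0. have := Z1_0 j. lia. Qed.

Lemma Z2_1 j : Z.of_nat (v (j + 2) 1) = Z.of_nat (v j 0) + Z.of_nat (v j 1) + 3 * Z.of_nat (v j 3).
Proof. rewrite (_ : (j + 2 = (j + 1).+1)%nat); last by rewrite addnS.
rewrite vr1. have := Z1_1 j. have := Z1_3 j. lia. Qed.

Lemma Z2_2 j : Z.of_nat (v (j + 2) 2) = Z.of_nat (v j 0) + Z.of_nat (v j 1) + Z.of_nat (v j 2) + 4 * Z.of_nat (v j 3) + 3 * Z.of_nat (v j 4) + 3 * Z.of_nat (v j 5) + Z.of_nat (v j 6) + Z.of_nat (v j 7) + Z.of_nat (v j 8).
Proof. rewrite (_ : (j + 2 = (j + 1).+1)%nat); last by rewrite addnS.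
rewrite vr2. have := Z1_2 j. have := Z1_4 j. have := Z1_5 j. lia. Qed.

Lemma Z2_3 j : Z.of_nat (v (j + 2) 3) = 3 * Z.of_nat (v j 0) + 4 * Z.of_nat (v j 3).
Proof. rewrite (_ : (j + 2 = (j + 1).+1)%nat); last by rewrite addnS.
rewrite vr3. have := Z1_0 j. have := Z1_3 j. lia. Qed.

Lemma Z2_4 j : Z.of_nat (v (j + 2) 4) = 4 * Z.of_nat (v j 0) + 3 * Z.of_nat (v j 1) + 19 * Z.of_nat (v j 3) + 4 * Z.of_nat (v j 4) + 5 * Z.of_nat (v j 7) + 6 * Z.of_nat (v j 8).
Proof. rewrite (_ : (j + 2 = (j + 1).+1)%nat); last by rewrite addnS.
rewrite vr4. have := Z1_1 j. have := Z1_3 j. have := Z1_4 j. have := Z1_7 j. have := Z1_8 j. lia. Qed.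

Lemma Z2_5 j : Z.of_nat (v (j + 2) 5) = 6 * Z.of_nat (v j 0) + 11 * Z.of_nat (v j 3) + 5 * Z.of_nat (v j 5) + 5 * Z.of_nat (v j 6).
Proof. rewrite (_ : (j + 2 = (j + 1).+1)%nat); last by rewrite addnS.
rewrite vr5. have := Z1_0 j. have := Z1_3 j. have := Z1_5 j. have := Z1_6 j. lia. Qed.

Lemma Z2_6 j : Z.of_nat (v (j + 2) 6) = 8 * Z.of_nat (v j 0) + 17 * Z.of_nat (v j 3) + 5 * Z.of_nat (v j 5) + 10 * Z.of_nat (v j 6).
Proof. rewrite (_ : (j + 2 = (j + 1).+1)%nat); last by rewrite addnS.
rewrite vr6. have := Z1_0 j. have := Z1_3 j. have := Z1_5 j. have := Z1_6 j. lia. Qed.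

Lemma Z2_7 j : Z.of_nat (v (j + 2) 7) = 8 * Z.of_nat (v j 0) + 22 * Z.of_nat (v j 3) + 5 * Z.of_nat (v j 7) + 5 * Z.of_nat (v j 8).
Proof. rewrite (_ : (j + 2 = (j + 1).+1)%nat); last by rewrite addnS.
rewrite vr7. have := Z1_0 j. have := Z1_3 j. have := Z1_7 j. have := Z1_8 j. lia. Qed.

Lemma Z2_8 j : Z.of_nat (v (j + 2) 8) = 11 * Z.of_nat (v j 0) + 34 * Z.of_nat (v j 3) + 5 * Z.of_nat (v j 7) + 10 * Z.of_nat (v j 8).
Proof. rewrite (_ : (j + 2 = (j + 1).+1)%nat); last by rewrite addnS.
rewrite vr8. have := Z1_0 j. have := Z1_3 j. have := Z1_7 j. have := Z1_8 j. lia. Qed.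

Lemma Z3_0 j : Z.of_nat (v (j + 3) 0) = Z.of_nat (v j 0).
Proof. rewrite (_ : (j + 3 = (j + 2).+1)%nat); last by rewrite addnS.
rewrite vr0. have := Z2_0 j. lia. Qed.

Lemma Z3_1 j : Z.of_nat (v (j + 3) 1) = 4 * Z.of_nat (v j 0) + Z.of_nat (v j 1) + 7 * Z.of_nat (v j 3).
Proof. rewrite (_ : (j + 3 = (j + 2).+1)%nat); last by rewrite addnS.
rewrite vr1. have := Z2_1 j. have := Z2_3 j. lia. Qed.

Lemma Z3_2 j : Z.of_nat (v (j + 3) 2) = 11 * Z.of_nat (v j 0) + 4 * Z.of_nat (v j 1) + Z.of_nat (v j 2) + 34 * Z.of_nat (v j 3) + 7 * Z.of_nat (v j 4) + 8 * Z.of_nat (v j 5) + 6 * Z.of_nat (v j 6) + 6 * Z.of_nat (v j 7) + 7 * Z.of_nat (v j 8).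
Proof. rewrite (_ : (j + 3 = (j + 2).+1)%nat); last by rewrite addnS.
rewrite vr2. have := Z2_2 j. have := Z2_4 j. have := Z2_5 j. lia. Qed.

Lemma Z3_3 j : Z.of_nat (v (j + 3) 3) = 7 * Z.of_nat (v j 0) + 8 * Z.of_nat (v j 3).
Proof. rewrite (_ : (j + 3 = (j + 2).+1)%nat); last by rewrite addnS.
rewrite vr3. have := Z2_0 j. have := Z2_3 j. lia. Qed.

Lemma Z3_4 j : Z.of_nat (v (j + 3) 4) = 34 * Z.of_nat (v j 0) + 7 * Z.of_nat (v j 1) + 105 * Z.of_nat (v j 3) + 8 * Z.of_nat (v j 4) + 20 * Z.of_nat (v j 7) + 27 * Z.of_nat (v j 8).
Proof. rewrite (_ : (j + 3 = (j + 2).+1)%nat); last by rewrite addnS.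
rewrite vr4. have := Z2_1 j. have := Z2_3 j. have := Z2_4 j. have := Z2_7 j. have := Z2_8 j. lia. Qed.

Lemma Z3_5 j : Z.of_nat (v (j + 3) 5) = 27 * Z.of_nat (v j 0) + 47 * Z.of_nat (v j 3) + 15 * Z.of_nat (v j 5) + 20 * Z.of_nat (v j 6).
Proof. rewrite (_ : (j + 3 = (j + 2).+1)%nat); last by rewrite addnS.
rewrite vr5. have := Z2_0 j. have := Z2_3 j. have := Z2_5 j. have := Z2_6 j. lia. Qed.

Lemma Z3_6 j : Z.of_nat (v (j + 3) 6) = 40 * Z.of_nat (v j 0) + 74 * Z.of_nat (v j 3) + 20 * Z.of_nat (v j 5) + 35 * Z.of_nat (v j 6).
Proof. rewrite (_ : (j + 3 = (j + 2).+1)%nat); last by rewrite addnS.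
rewrite vr6. have := Z2_0 j. have := Z2_3 j. have := Z2_5 j. have := Z2_6 j. lia. Qed.

Lemma Z3_7 j : Z.of_nat (v (j + 3) 7) = 40 * Z.of_nat (v j 0) + 94 * Z.of_nat (v j 3) + 15 * Z.of_nat (v j 7) + 20 * Z.of_nat (v j 8).
Proof. rewrite (_ : (j + 3 = (j + 2).+1)%nat); last by rewrite addnS.
rewrite vr7. have := Z2_0 j. have := Z2_3 j. have := Z2_7 j. have := Z2_8 j. lia. Qed.

Lemma Z3_8 j : Z.of_nat (v (j + 3) 8) = 60 * Z.of_nat (v j 0) + 148 * Z.of_nat (v j 3) + 20 * Z.of_nat (v j 7) + 35 * Z.of_nat (v j 8).
Proof. rewrite (_ : (j + 3 = (j + 2).+1)%nat); last by rewrite addnS.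
rewrite vr8. have := Z2_0 j. have := Z2_3 j. have := Z2_7 j. have := Z2_8 j. lia. Qed.

Lemma Z4_0 j : Z.of_nat (v (j + 4) 0) = Z.of_nat (v j 0).
Proof. rewrite (_ : (j + 4 = (j + 3).+1)%nat); last by rewrite addnS.
rewrite vr0. have := Z3_0 j. lia. Qed.

Lemma Z4_1 j : Z.of_nat (v (j + 4) 1) = 11 * Z.of_nat (v j 0) + Z.of_nat (v j 1) + 15 * Z.of_nat (v j 3).
Proof. rewrite (_ : (j + 4 = (j + 3).+1)%nat); last by rewrite addnS.
rewrite vr1. have := Z3_1 j. have := Z3_3 j. lia. Qed.

Lemma Z4_2 j : Z.of_nat (v (j + 4) 2) = 72 * Z.of_nat (v j 0) + 11 * Z.of_nat (v j 1) + Z.of_nat (v j 2) + 186 * Z.of_nat (v j 3) + 15 * Z.of_nat (v j 4) + 23 * Z.of_nat (v j 5) + 26 * Z.of_nat (v j 6) + 26 * Z.of_nat (v j 7) + 34 * Z.of_nat (v j 8).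
Proof. rewrite (_ : (j + 4 = (j + 3).+1)%nat); last by rewrite addnS.
rewrite vr2. have := Z3_2 j. have := Z3_4 j. have := Z3_5 j. lia. Qed.

Lemma Z4_3 j : Z.of_nat (v (j + 4) 3) = 15 * Z.of_nat (v j 0) + 16 * Z.of_nat (v j 3).
Proof. rewrite (_ : (j + 4 = (j + 3).+1)%nat); last by rewrite addnS.
rewrite vr3. have := Z3_0 j. have := Z3_3 j. lia. Qed.

Lemma Z4_4 j : Z.of_nat (v (j + 4) 4) = 186 * Z.of_nat (v j 0) + 15 * Z.of_nat (v j 1) + 475 * Z.of_nat (v j 3) + 16 * Z.of_nat (v j 4) + 75 * Z.of_nat (v j 7) + 109 * Z.of_nat (v j 8).
Proof. rewrite (_ : (j + 4 = (j + 3).+1)%nat); last by rewrite addnS.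
rewrite vr4. have := Z3_1 j. have := Z3_3 j. have := Z3_4 j. have := Z3_7 j. have := Z3_8 j. lia. Qed.

Lemma Z4_5 j : Z.of_nat (v (j + 4) 5) = 109 * Z.of_nat (v j 0) + 184 * Z.of_nat (v j 3) + 50 * Z.of_nat (v j 5) + 75 * Z.of_nat (v j 6).
Proof. rewrite (_ : (j + 4 = (j + 3).+1)%nat); last by rewrite addnS.
rewrite vr5. have := Z3_0 j. have := Z3_3 j. have := Z3_5 j. have := Z3_6 j. lia. Qed.

Lemma Z4_6 j : Z.of_nat (v (j + 4) 6) = 169 * Z.of_nat (v j 0) + 293 * Z.of_nat (v j 3) + 75 * Z.of_nat (v j 5) + 125 * Z.of_nat (v j 6).
Proof. rewrite (_ : (j + 4 = (j + 3).+1)%nat); last by rewrite addnS.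
rewrite vr6. have := Z3_0 j. have := Z3_3 j. have := Z3_5 j. have := Z3_6 j. lia. Qed.

Lemma Z4_7 j : Z.of_nat (v (j + 4) 7) = 169 * Z.of_nat (v j 0) + 368 * Z.of_nat (v j 3) + 50 * Z.of_nat (v j 7) + 75 * Z.of_nat (v j 8).
Proof. rewrite (_ : (j + 4 = (j + 3).+1)%nat); last by rewrite addnS.
rewrite vr7. have := Z3_0 j. have := Z3_3 j. have := Z3_7 j. have := Z3_8 j. lia. Qed.

Lemma Z4_8 j : Z.of_nat (v (j + 4) 8) = 263 * Z.of_nat (v j 0) + 586 * Z.of_nat (v j 3) + 75 * Z.of_nat (v j 7) + 125 * Z.of_nat (v j 8).
Proof. rewrite (_ : (j + 4 = (j + 3).+1)%nat); last by rewrite addnS.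
rewrite vr8. have := Z3_0 j. have := Z3_3 j. have := Z3_7 j. have := Z3_8 j. lia. Qed.

Lemma Z5_0 j : Z.of_nat (v (j + 5) 0) = Z.of_nat (v j 0).
Proof. rewrite (_ : (j + 5 = (j + 4).+1)%nat); last by rewrite addnS.
rewrite vr0. have := Z4_0 j. lia. Qed.

Lemma Z5_1 j : Z.of_nat (v (j + 5) 1) = 26 * Z.of_nat (v j 0) + Z.of_nat (v j 1) + 31 * Z.of_nat (v j 3).
Proof. rewrite (_ : (j + 5 = (j + 4).+1)%nat); last by rewrite addnS.
rewrite vr1. have := Z4_1 j. have := Z4_3 j. lia. Qed.

Lemma Z5_2 j : Z.of_nat (v (j + 5) 2) = 367 * Z.of_nat (v j 0) + 26 * Z.of_nat (v j 1) + Z.of_nat (v j 2) + 845 * Z.of_nat (v j 3) + 31 * Z.of_nat (v j 4) + 73 * Z.of_nat (v j 5) + 101 * Z.of_nat (v j 6) + 101 * Z.of_nat (v j 7) + 143 * Z.of_nat (v j 8).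
Proof. rewrite (_ : (j + 5 = (j + 4).+1)%nat); last by rewrite addnS.
rewrite vr2. have := Z4_2 j. have := Z4_4 j. have := Z4_5 j. lia. Qed.

Lemma Z5_3 j : Z.of_nat (v (j + 5) 3) = 31 * Z.of_nat (v j 0) + 32 * Z.of_nat (v j 3).
Proof. rewrite (_ : (j + 5 = (j + 4).+1)%nat); last by rewrite addnS.
rewrite vr3. have := Z4_0 j. have := Z4_3 j. lia. Qed.

Lemma Z5_4 j : Z.of_nat (v (j + 5) 4) = 845 * Z.of_nat (v j 0) + 31 * Z.of_nat (v j 1) + 1951 * Z.of_nat (v j 3) + 32 * Z.of_nat (v j 4) + 275 * Z.of_nat (v j 7) + 418 * Z.of_nat (v j 8).
Proof. rewrite (_ : (j + 5 = (j + 4).+1)%nat); last by rewrite addnS.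
rewrite vr4. have := Z4_1 j. have := Z4_3 j. have := Z4_4 j. have := Z4_7 j. have := Z4_8 j. lia. Qed.

Lemma Z5_5 j : Z.of_nat (v (j + 5) 5) = 418 * Z.of_nat (v j 0) + 693 * Z.of_nat (v j 3) + 175 * Z.of_nat (v j 5) + 275 * Z.of_nat (v j 6).
Proof. rewrite (_ : (j + 5 = (j + 4).+1)%nat); last by rewrite addnS.
rewrite vr5. have := Z4_0 j. have := Z4_3 j. have := Z4_5 j. have := Z4_6 j. lia. Qed.

Lemma Z5_6 j : Z.of_nat (v (j + 5) 6) = 662 * Z.of_nat (v j 0) + 1111 * Z.of_nat (v j 3) + 275 * Z.of_nat (v j 5) + 450 * Z.of_nat (v j 6).
Proof. rewrite (_ : (j + 5 = (j + 4).+1)%nat); last by rewrite addnS.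
rewrite vr6. have := Z4_0 j. have := Z4_3 j. have := Z4_5 j. have := Z4_6 j. lia. Qed.

Lemma Z5_7 j : Z.of_nat (v (j + 5) 7) = 662 * Z.of_nat (v j 0) + 1386 * Z.of_nat (v j 3) + 175 * Z.of_nat (v j 7) + 275 * Z.of_nat (v j 8).
Proof. rewrite (_ : (j + 5 = (j + 4).+1)%nat); last by rewrite addnS.
rewrite vr7. have := Z4_0 j. have := Z4_3 j. have := Z4_7 j. have := Z4_8 j. lia. Qed.

Lemma Z5_8 j : Z.of_nat (v (j + 5) 8) = 1049 * Z.of_nat (v j 0) + 2222 * Z.of_nat (v j 3) + 275 * Z.of_nat (v j 7) + 450 * Z.of_nat (v j 8).
Proof. rewrite (_ : (j + 5 = (j + 4).+1)%nat); last by rewrite addnS.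
rewrite vr8. have := Z4_0 j. have := Z4_3 j. have := Z4_7 j. have := Z4_8 j. lia. Qed.

Lemma Z6_0 j : Z.of_nat (v (j + 6) 0) = Z.of_nat (v j 0).
Proof. rewrite (_ : (j + 6 = (j + 5).+1)%nat); last by rewrite addnS.
rewrite vr0. have := Z5_0 j. lia. Qed.

Lemma Z6_1 j : Z.of_nat (v (j + 6) 1) = 57 * Z.of_nat (v j 0) + Z.of_nat (v j 1) + 63 * Z.of_nat (v j 3).
Proof. rewrite (_ : (j + 6 = (j + 5).+1)%nat); last by rewrite addnS.
rewrite vr1. have := Z5_1 j. have := Z5_3 j. lia. Qed.

Lemma Z6_2 j : Z.of_nat (v (j + 6) 2) = 1630 * Z.of_nat (v j 0) + 57 * Z.of_nat (v j 1) + Z.of_nat (v j 2) + 3489 * Z.of_nat (v j 3) + 63 * Z.of_nat (v j 4) + 248 * Z.of_nat (v j 5) + 376 * Z.of_nat (v j 6) + 376 * Z.of_nat (v j 7) + 561 * Z.of_nat (v j 8).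
Proof. rewrite (_ : (j + 6 = (j + 5).+1)%nat); last by rewrite addnS.
rewrite vr2. have := Z5_2 j. have := Z5_4 j. have := Z5_5 j. lia. Qed.

Lemma Z6_3 j : Z.of_nat (v (j + 6) 3) = 63 * Z.of_nat (v j 0) + 64 * Z.of_nat (v j 3).
Proof. rewrite (_ : (j + 6 = (j + 5).+1)%nat); last by rewrite addnS.
rewrite vr3. have := Z5_0 j. have := Z5_3 j. lia. Qed.

Lemma Z6_4 j : Z.of_nat (v (j + 6) 4) = 3489 * Z.of_nat (v j 0) + 63 * Z.of_nat (v j 1) + 7605 * Z.of_nat (v j 3) + 64 * Z.of_nat (v j 4) + 1000 * Z.of_nat (v j 7) + 1561 * Z.of_nat (v j 8).
Proof. rewrite (_ : (j + 6 = (j + 5).+1)%nat); last by rewrite addnS.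
rewrite vr4. have := Z5_1 j. have := Z5_3 j. have := Z5_4 j. have := Z5_7 j. have := Z5_8 j. lia. Qed.

Lemma Z6_5 j : Z.of_nat (v (j + 6) 5) = 1561 * Z.of_nat (v j 0) + 2561 * Z.of_nat (v j 3) + 625 * Z.of_nat (v j 5) + 1000 * Z.of_nat (v j 6).
Proof. rewrite (_ : (j + 6 = (j + 5).+1)%nat); last by rewrite addnS.
rewrite vr5. have := Z5_0 j. have := Z5_3 j. have := Z5_5 j. have := Z5_6 j. lia. Qed.

Lemma Z6_6 j : Z.of_nat (v (j + 6) 6) = 2498 * Z.of_nat (v j 0) + 4122 * Z.of_nat (v j 3) + 1000 * Z.of_nat (v j 5) + 1625 * Z.of_nat (v j 6).
Proof. rewrite (_ : (j + 6 = (j + 5).+1)%nat); last by rewrite addnS.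
rewrite vr6. have := Z5_0 j. have := Z5_3 j. have := Z5_5 j. have := Z5_6 j. lia. Qed.

Lemma Z6_7 j : Z.of_nat (v (j + 6) 7) = 2498 * Z.of_nat (v j 0) + 5122 * Z.of_nat (v j 3) + 625 * Z.of_nat (v j 7) + 1000 * Z.of_nat (v j 8).
Proof. rewrite (_ : (j + 6 = (j + 5).+1)%nat); last by rewrite addnS.
rewrite vr7. have := Z5_0 j. have := Z5_3 j. have := Z5_7 j. have := Z5_8 j. lia. Qed.

Lemma Z6_8 j : Z.of_nat (v (j + 6) 8) = 3996 * Z.of_nat (v j 0) + 8244 * Z.of_nat (v j 3) + 1000 * Z.of_nat (v j 7) + 1625 * Z.of_nat (v j 8).
Proof. rewrite (_ : (j + 6 = (j + 5).+1)%nat); last by rewrite addnS.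
rewrite vr8. have := Z5_0 j. have := Z5_3 j. have := Z5_7 j. have := Z5_8 j. lia. Qed.

Lemma Z7_0 j : Z.of_nat (v (j + 7) 0) = Z.of_nat (v j 0).
Proof. rewrite (_ : (j + 7 = (j + 6).+1)%nat); last by rewrite addnS.
rewrite vr0. have := Z6_0 j. lia. Qed.

Lemma Z7_1 j : Z.of_nat (v (j + 7) 1) = 120 * Z.of_nat (v j 0) + Z.of_nat (v j 1) + 127 * Z.of_nat (v j 3).
Proof. rewrite (_ : (j + 7 = (j + 6).+1)%nat); last by rewrite addnS.
rewrite vr1. have := Z6_1 j. have := Z6_3 j. lia. Qed.

Lemma Z7_2 j : Z.of_nat (v (j + 7) 2) = 6680 * Z.of_nat (v j 0) + 120 * Z.of_nat (v j 1) + Z.of_nat (v j 2) + 13655 * Z.of_nat (v j 3) + 127 * Z.of_nat (v j 4) + 873 * Z.of_nat (v j 5) + 1376 * Z.of_nat (v j 6) + 1376 * Z.of_nat (v j 7) + 2122 * Z.of_nat (v j 8).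
Proof. rewrite (_ : (j + 7 = (j + 6).+1)%nat); last by rewrite addnS.
rewrite vr2. have := Z6_2 j. have := Z6_4 j. have := Z6_5 j. lia. Qed.

Lemma Z7_3 j : Z.of_nat (v (j + 7) 3) = 127 * Z.of_nat (v j 0) + 128 * Z.of_nat (v j 3).
Proof. rewrite (_ : (j + 7 = (j + 6).+1)%nat); last by rewrite addnS.
rewrite vr3. have := Z6_0 j. have := Z6_3 j. lia. Qed.

Lemma Z7_4 j : Z.of_nat (v (j + 7) 4) = 13655 * Z.of_nat (v j 0) + 127 * Z.of_nat (v j 1) + 28767 * Z.of_nat (v j 3) + 128 * Z.of_nat (v j 4) + 3625 * Z.of_nat (v j 7) + 5747 * Z.of_nat (v j 8).
Proof. rewrite (_ : (j + 7 = (j + 6).+1)%nat); last by rewrite addnS.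
rewrite vr4. have := Z6_1 j. have := Z6_3 j. have := Z6_4 j. have := Z6_7 j. have := Z6_8 j. lia. Qed.

Lemma Z7_5 j : Z.of_nat (v (j + 7) 5) = 5747 * Z.of_nat (v j 0) + 9372 * Z.of_nat (v j 3) + 2250 * Z.of_nat (v j 5) + 3625 * Z.of_nat (v j 6).
Proof. rewrite (_ : (j + 7 = (j + 6).+1)%nat); last by rewrite addnS.
rewrite vr5. have := Z6_0 j. have := Z6_3 j. have := Z6_5 j. have := Z6_6 j. lia. Qed.

Lemma Z7_6 j : Z.of_nat (v (j + 7) 6) = 9245 * Z.of_nat (v j 0) + 15119 * Z.of_nat (v j 3) + 3625 * Z.of_nat (v j 5) + 5875 * Z.of_nat (v j 6).
Proof. rewrite (_ : (j + 7 = (j + 6).+1)%nat); last by rewrite addnS.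
rewrite vr6. have := Z6_0 j. have := Z6_3 j. have := Z6_5 j. have := Z6_6 j. lia. Qed.

Lemma Z7_7 j : Z.of_nat (v (j + 7) 7) = 9245 * Z.of_nat (v j 0) + 18744 * Z.of_nat (v j 3) + 2250 * Z.of_nat (v j 7) + 3625 * Z.of_nat (v j 8).
Proof. rewrite (_ : (j + 7 = (j + 6).+1)%nat); last by rewrite addnS.
rewrite vr7. have := Z6_0 j. have := Z6_3 j. have := Z6_7 j. have := Z6_8 j. lia. Qed.

Lemma Z7_8 j : Z.of_nat (v (j + 7) 8) = 14865 * Z.of_nat (v j 0) + 30238 * Z.of_nat (v j 3) + 3625 * Z.of_nat (v j 7) + 5875 * Z.of_nat (v j 8).
Proof. rewrite (_ : (j + 7 = (j + 6).+1)%nat); last by rewrite addnS.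
rewrite vr8. have := Z6_0 j. have := Z6_3 j. have := Z6_7 j. have := Z6_8 j. lia. Qed.

End ZS.

Lemma rec7 m : v (m + 7) 2 + 59 * v (m + 5) 2 + 236 * v (m + 3) 2 + 100 * v (m + 1) 2 = 12 * v (m + 6) 2 + 155 * v (m + 4) 2 + 209 * v (m + 2) 2 + 20 * v m 2.
Proof. have := Z1_2 m. have := Z2_2 m. have := Z3_2 m. have := Z4_2 m. have := Z5_2 m. have := Z6_2 m. have := Z7_2 m. lia. Qed.

Lemma val1 : v 1 2 = 0.
Proof. have := Z1_2 0. rewrite add0n !v0 //=. lia. Qed.

Lemma val2 : v 2 2 = 1.
Proof. have := Z2_2 0. rewrite add0n !v0 //=. lia. Qed.

Lemma val3 : v 3 2 = 11.
Proof. have := Z3_2 0. rewrite add0n !v0 //=. lia. Qed.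

Lemma val4 : v 4 2 = 72.
Proof. have := Z4_2 0. rewrite add0n !v0 //=. lia. Qed.

Lemma val5 : v 5 2 = 367.
Proof. have := Z5_2 0. rewrite add0n !v0 //=. lia. Qed.

Lemma val6 : v 6 2 = 1630.
Proof. have := Z6_2 0. rewrite add0n !v0 //=. lia. Qed.

Lemma ge_v n : gen_eulerian n 2 2 = v n 2.
Proof.
rewrite /v /Gs /G /= /gen_eulerian /Tp -sum1_card big_mkcond /=; apply: eq_bigr => A _.
rewrite inE /rook_placement.
have -> : [forall i, \sum_(k < n) (A i k : nat) + 0 == 2] = [forall i, \sum_(k < n) (A i k : nat) == 2].
  by apply: eq_forallb => i; rewrite addn0.
have -> : [forall k, \sum_(i < n) (A i k : nat) + 0 == 2] = [forall k, \sum_(i < n) (A i k : nat) == 2].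
  by apply: eq_forallb => i; rewrite addn0.
by case: [forall i, _]; case: [forall j, _]; case: (drops _ == 2).
Qed.

Section Fin.
Local Open Scope ring_scope.
Import GRing.Theory.

Definition dl : seq int := [:: 1; -12; 59; -155; 236; -209; 100; -20].
Definition nl : seq int := [:: 0; 0; 1; -1; -1; -3; 5].

Lemma den_coef i : gf_den`_i = nth 0 dl i.
Proof.
have -> : gf_den = Poly dl.
  rewrite /gf_den /dl /= !cons_poly_def !polyCN !polyC1 polyC0.
  ring.
by rewrite coef_Poly.
Qed.

Lemma num_coef i : gf_num`_i = nth 0 nl i.
Proof.
have -> : gf_num = Poly nl.
  rewrite /gf_num /nl /= !cons_poly_def !polyCN !polyC1 polyC0.
  ring.
by rewrite coef_Poly.
Qed.
End Fin.

Lemma sum_trunc (F : nat -> int) N K : K <= N -> (forall i, K <= i -> F i = 0%R) ->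
  (\sum_(i < N) F i = \sum_(i < K) F i)%R.
Proof.
move=> HKN HF.
rewrite -!(big_mkord xpredT) (big_cat_nat (leq0n K) HKN) /= [X in (_ + X)%R]big1_seq ?GRing.addr0 //.
by move=> i /=; rewrite mem_index_iota => /andP[Hi _]; apply: HF.
Qed.

Import GRing.Theory.
Local Open Scope ring_scope.

Theorem mainTheorem8 :
  forall n : nat,
    \sum_(i < n.+1) gf_den`_i * ((gen_eulerian (n - i) 2 2)%:Z) = gf_num`_n.
Proof.
move=> n; rewrite num_coef.
under eq_bigr => i _ do rewrite den_coef ge_v.
case: (ltnP n 7) => Hn.
  case: n Hn => [|[|[|[|[|[|[|n]]]]]]] // _; rewrite !big_ord_recr big_ord0 /=.
  all: rewrite ?subSS ?subn0 ?val1 ?val2 ?val3 ?val4 ?val5 ?val6 ?v0 //=.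
have [m ->] : exists m, n = (m + 7)%nat by exists (n - 7)%nat; rewrite subnK.
rewrite (@sum_trunc (fun i => dl`_i * (v (m + 7 - i) 2)%:Z) _ 8) ?ltnS ?leq_addl //; last first.
  by move=> i Hi; rewrite nth_default ?mul0r.
rewrite nth_default; last by rewrite /= leq_addl.
transitivity (\sum_(i < 8) dl`_i * (v (m + (7 - i)) 2)%:Z).
  by apply: eq_bigr => i _; rewrite addnBA // -ltnS.
rewrite !big_ord_recr big_ord0 /= ?subSS ?subn0 ?addn0.
have := rec7 m.
lia.
Qed.
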